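(* Let $q\ge2$, $t,b\ge1$ and $n\ge bt+1$. For any $\sigma\in\Sigma_q$ and $j\in[0,b-1]$, let $\boldsymbol{Y}^{\sigma,j}_{n,q,b}:=\sigma^j\circ\boldsymbol{X}^{\sigma+1}_{n-j,q,b}$ (with $\sigma+1$ taken modulo $q$). Then \[ |\mathcal{D}_{t,b}(\boldsymbol{Y}^{\sigma,j}_{n,q,b})|=d_{q,b}(n,t)=D_{q,b}(n,t). \]
   Context: $\Sigma_q=\{0,\ldots,q-1\}$; $\sigma^j$ is $j$ copies of $\sigma$ and $\circ$ is concatenation. A $b$-burst-deletion at position $i\in[1,n-b+1]$ transforms $x_1\cdots x_n$ into $x_1\cdots x_{i-1}x_{i+b}\cdots x_n$. For $n\ge tb+1$, $t\ge 0$, $\mathcal{D}_{t,b}(\boldsymbol{x})$ is the set of all length-$(n-tb)$ sequences obtainable from $\boldsymbol{x}$ by $t$ successive $b$-burst-deletions ($\mathcal{D}_{0,b}(\boldsymbol{x})=\{\boldsymbol{x}\}$). $D_{q,b}(n,t)=\max\{|\mathcal{D}_{t,b}(\boldsymbol{x})|:\boldsymbol{x}\in\Sigma_q^n\}$. The $b$-cyclic sequence $\boldsymbol{X}^{\sigma}_{m,q,b}=X_1\cdots X_m$ has $X_i\equiv\sigma+\lfloor (i-1)/b\rfloor\pmod q$. For $m\ge bs+1$, $s\ge0$, $d_{q,b}(m,s):=|\mathcal{D}_{s,b}(\boldsymbol{X}^0_{m,q,b})|$; $d_{q,b}(m,s)=1$ if $m=bs\ge0$, and $d_{q,b}(m,s)=0$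 if $m<bs$ or $s<0$. *)

(* Defs.v *)
From mathcomp Require Import all_boot.
Set Implicit Arguments. Unset Strict Implicit. Unset Printing Implicit Defensive.

(* Sequences over Sigma_q = {0,...,q-1} are represented as seq nat. *)

(* b-burst-deletion at 0-indexed position i (paper's position i+1):
   removes x_{i+1} ... x_{i+b}. *)
Definition burst_del (b i : nat) (x : seq nat) : seq nat :=
  take i x ++ drop (i + b) x.

Definition burst_dels (b : nat) (x : seq nat) : seq (seq nat) :=
  if b <= size x then [seq burst_del b i x | i <- iota 0 (size x - b).+1]
  else [::].

Definition Dset (t b : nat) (x : seq nat) : seq (seq nat) :=
  iter t (fun S => undup (flatten (map (burst_dels b) S))) [:: x].

Definition Dcard (t b : nat) (x : seq nat) : nat := size (Dset t b x).

Definition Dmax (q b n t : nat) : nat :=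
  \max_(x : n.-tuple 'I_q) Dcard t b [seq nat_of_ord i | i <- x].

(* b-cyclic sequence X^sigma_{m,q,b}: X_i = sigma + floor((i-1)/b) mod q
   (1-indexed i; here 0-indexed). *)
Definition Xcyc (sigma m q b : nat) : seq nat :=
  mkseq (fun i => (sigma + i %/ b) %% q) m.

Definition dcyc (q b m s : nat) : nat :=
  if b * s < m then Dcard s b (Xcyc 0 m q b)
  else if m == b * s then 1 else 0.

Definition Ycyc (sigma j n q b : nat) : seq nat :=
  nseq j sigma ++ Xcyc ((sigma + 1) %% q) (n - j) q b.

(* Main.v *)
Require Import Defs.
From mathcomp Require Import all_boot zify.
Set Implicit Arguments. Unset Strict Implicit. Unset Printing Implicit Defensive.

Section S.
Variable b : nat.
Hypothesis b_gt0 : 0 < b.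

Notation D t x := (Dset t b x).

Lemma Dset_uniq t x : uniq (D t x).
Proof. by case: t => [|t] //=; apply: undup_uniq. Qed.

Lemma mem_DsetS t x y : (y \in D t.+1 x) = has (fun z => y \in burst_dels b z) (D t x).
Proof.
rewrite /Dset iterS -/(Dset t b x) mem_undup.
apply/flatten_mapP/hasP => [[z Hz Hy]|[z Hz Hy]]; by exists z.
Qed.

Lemma mem_bd x y : reflect (b <= size x /\ exists2 i, i <= size x - b & y = burst_del b i x)
  (y \in burst_dels b x).
Proof.
rewrite /burst_dels; case: ifP => Hb.
  apply: (iffP mapP) => [[i Hi ->]|[_ [i Hi ->]]].
    split=> //; exists i => //; move: Hi; rewrite mem_iota; lia.
  by exists i; rewrite // mem_iota; lia.
by rewrite in_nil; constructor => -[].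
Qed.

Lemma size_bd x i : b <= size x -> i <= size x - b -> size (burst_del b i x) = size x - b.
Proof. move=> H1 H2; rewrite /burst_del size_cat size_take size_drop; case: ifP; lia. Qed.

Lemma Dset_size t x y : y \in D t x -> size y + t * b = size x.
Proof.
elim: t y => [|t IH] y /=.
  by rewrite inE => /eqP ->; lia.
rewrite mem_DsetS => /hasP [z Hz /mem_bd [H1 [i Hi ->]]].
rewrite size_bd // mulSn; by rewrite -(IH _ Hz) addnA subnK.
Qed.

Lemma Dset_comp r s x y :
  reflect (exists2 z, z \in D r x & y \in D s z) (y \in D (r + s) x).
Proof.
elim: s y => [|s IH] y.
  rewrite addn0; apply: (iffP idP) => [H|[z Hz]]; first by exists y; rewrite // inE.
  by rewrite /= inE => /eqP ->.
rewrite addnS mem_DsetS; apply: (iffP hasP).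
  move=> [w /IH [z Hz Hw] Hy]; exists z => //; rewrite mem_DsetS; apply/hasP; by exists w.
move=> [z Hz]; rewrite mem_DsetS => /hasP [w Hw Hy]; exists w => //; apply/IH; by exists z.
Qed.

Lemma mem_Dset1 x y : (y \in D 1 x) = (y \in burst_dels b x).
Proof. by rewrite mem_DsetS /= orbF. Qed.

Lemma Dset_first t x y :
  reflect (exists2 z, z \in burst_dels b x & y \in D t z) (y \in D t.+1 x).
Proof.
rewrite -add1n; apply: (iffP (Dset_comp _ _ _ _)) => -[z Hz Hy]; exists z => //;
  by rewrite ?mem_Dset1 // -mem_Dset1.
Qed.

Lemma drop_Dset d x : d * b <= size x -> drop (d * b) x \in D d x.
Proof.
elim: d => [|d IH] H; first by rewrite drop0 /= inE.
rewrite mem_DsetS; apply/hasP; exists (drop (d * b) x); first by apply: IH; lia.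
apply/mem_bd; split; first by rewrite size_drop; lia.
exists 0 => //; by rewrite /burst_del take0 /= drop_drop mulSn addnC.
Qed.

Lemma cons_bd a w z : z \in burst_dels b w -> a :: z \in burst_dels b (a :: w).
Proof.
move=> /mem_bd [H1 [i Hi ->]]; apply/mem_bd; split=> /=; first lia.
by exists i.+1; [lia | rewrite /burst_del /=].
Qed.

Lemma cons_Dset t a w z : z \in D t w -> a :: z \in D t (a :: w).
Proof.
elim: t z => [|t IH] z /=; first by rewrite !inE => /eqP ->.
rewrite !mem_DsetS => /hasP [z' Hz' Hz]; apply/hasP; exists (a :: z'); first exact: IH.
exact: cons_bd.
Qed.


Lemma decompR t k x (y' : seq nat) : k <= t -> k * b < size x ->
  y' \in D (t - k) (drop (k * b).+1 x) -> nth 0 x (k * b) :: y' \in D t x.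
Proof.
move=> Hk Hs Hy; rewrite -[X in Dset X](subnKC Hk); apply/Dset_comp.
exists (drop (k * b) x); first by apply: drop_Dset; lia.
by rewrite (drop_nth 0) //; apply: cons_Dset.
Qed.

Lemma drop_bd m i (x : seq nat) : m <= i -> i <= size x ->
  drop m (burst_del b i x) = burst_del b (i - m) (drop m x).
Proof.
move=> Hm Hi; rewrite /burst_del take_drop drop_drop subnK // (_ : i - m + b + m = i + b); last lia.
rewrite drop_cat size_take.
have -> : (if i < size x then i else size x) = i by case: ifP; lia.
case: ltnP => H; first by [].
have -> : m = i by lia.
have -> : drop i (take i x) = [::] by apply: drop_oversize; rewrite size_take; case: ifP; lia.
by rewrite subnn drop0.
Qed.

Lemma decompL t (x y : seq nat) : y \in D t x -> t * b < size x ->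
  exists k, [/\ k <= t, k * b < size x &
     exists2 y' : seq nat, y = nth 0 x (k * b) :: y' & y' \in D (t - k) (drop (k * b).+1 x)].
Proof.
elim: t x y => [|t IH] x y.
  rewrite /= inE => /eqP -> Hs; exists 0; split => //.
  case: x Hs => [|a x] // _; exists x; rewrite mul0n //=; by rewrite drop0 inE.
move=> /Dset_first [z /mem_bd [H1 [i Hi ->]] Hy] Hsz.
have Hsz' : size (burst_del b i x) = size x - b by apply: size_bd.
have [k [Hk Hkb [y' -> Hy']]] := IH _ _ Hy ltac:(rewrite Hsz' mulSn in Hsz *; lia).
have Hti : size (take i x) = i by rewrite size_take; case: ifP; lia.
case: (ltnP (k * b) i) => Hki.
  exists k; rewrite Hsz' in Hkb; split; [lia | lia |].
  exists y'; first by rewrite /burst_del nth_cat Hti Hki nth_take.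
  rewrite subSn //; apply/Dset_first; exists (burst_del b (i - (k*b).+1) (drop (k*b).+1 x)).
    apply/mem_bd; rewrite size_drop; split; first lia.
    by exists (i - (k*b).+1) => //; lia.
  by rewrite -drop_bd //; lia.
exists k.+1; rewrite Hsz' in Hkb; split; [lia | rewrite mulSn; lia |].
exists y'.
  rewrite /burst_del nth_cat Hti ltnNge Hki /= nth_drop; congr (nth _ _ _ :: _).
  by rewrite mulSn; lia.
rewrite subSS; congr (_ \in Dset _ _ _): Hy'.
rewrite /burst_del drop_cat Hti ltnNge (leq_trans Hki) //= drop_drop mulSn; congr drop; lia.
Qed.


Definition newk (x : seq nat) k :=
  all (fun i => nth 0 x (i * b) != nth 0 x (k * b)) (iota 0 k).

Lemma uniq_heads x n : uniq [seq nth 0 x (k * b) | k <- filter (newk x) (iota 0 n)].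
Proof.
elim: n => [|n IH] //.
rewrite -addn1 iotaD add0n filter_cat map_cat cat_uniq IH /=.
case Hn: (newk x n) => //=; rewrite orbF andbT; apply/mapP => -[i Hi E].
move: Hi; rewrite mem_filter mem_iota => /andP [_ /andP [_ Hi]].
by move/allP: Hn => /(_ i); rewrite mem_iota Hi E eqxx => /(_ isT).
Qed.

Lemma uniqR (ks : seq nat) (hd : nat -> nat) (G : nat -> seq (seq nat)) :
  uniq (map hd ks) -> (forall k, uniq (G k)) ->
  uniq (flatten [seq map (cons (hd k)) (G k) | k <- ks]).
Proof.
elim: ks => [|k ks IH] //= /andP [Hn Hu] HG; rewrite cat_uniq IH // andbT.
rewrite map_inj_uniq ?HG //=; last by move=> ? ? [].
apply/hasPn => z /flatten_mapP [k' Hk' /mapP [w _ ->]]; apply/mapP => -[w' _ [E _]].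
by move: Hn; rewrite -E map_f.
Qed.

Lemma Dcard_decomp t x : t * b < size x ->
  Dcard t b x = \sum_(k <- iota 0 t.+1 | newk x k) Dcard (t - k) b (drop (k * b).+1 x).
Proof.
move=> Ht.
pose ks := filter (newk x) (iota 0 t.+1).
pose R := flatten [seq map (cons (nth 0 x (k * b))) (D (t - k) (drop (k * b).+1 x)) | k <- ks].
have HR : D t x =i R.
  move=> y; apply/idP/idP.
    move=> Hy; have [k [Hk Hkb [y' -> Hy']]] := decompL Hy Ht.
    have exP : exists i, (i <= t) && (nth 0 x (i * b) == nth 0 x (k * b)).
      by exists k; rewrite Hk eqxx.
    case: (ex_minnP exP) => k0 /andP [Hk0t /eqP Hv] Hmin.
    have Hk0k : k0 <= k by apply: Hmin; rewrite Hk eqxx.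
    apply/flatten_mapP; exists k0.
      rewrite mem_filter mem_iota; apply/andP; split; last lia; apply/allP => i.
      rewrite mem_iota => /andP [_ Hi]; apply/negP => /eqP E.
      have := Hmin i; rewrite E Hv eqxx andbT; lia.
    rewrite -Hv; apply: map_f.
    have Hkk : k0 * b <= k * b by apply: leq_mul.
    rewrite (_ : t - k0 = (k - k0) + (t - k)); last lia.
    apply/Dset_comp; exists (drop (k * b).+1 x) => //.
    have -> : drop (k * b).+1 x = drop ((k - k0) * b) (drop (k0 * b).+1 x).
      by rewrite drop_drop mulnBl; congr drop; lia.
    by apply: drop_Dset; rewrite size_drop mulnBl; lia.
  move/flatten_mapP => [k Hk /mapP [y' Hy' ->]].
  move: Hk; rewrite mem_filter mem_iota => /andP [_ /andP [_ Hk]].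
  apply: decompR => //; apply: leq_ltn_trans Ht; exact: leq_mul.
have -> : Dcard t b x = size R.
  rewrite /Dcard; apply/perm_size/uniq_perm => //; first exact: Dset_uniq.
  apply: uniqR; [exact: uniq_heads | move=> k; exact: Dset_uniq].
rewrite size_flatten /shape -map_comp sumnE big_map big_filter.
by apply: eq_bigr => k _; rewrite /= size_map.
Qed.


Lemma Dcard_exact t x : size x = t * b -> Dcard t b x = 1.
Proof.
move=> Hs.
have Hin : drop (t * b) x \in D t x by apply: drop_Dset; rewrite Hs.
have E : forall y, y \in D t x -> y = [::].
  by move=> y /Dset_size; rewrite Hs => H; apply/size0nil; lia.
rewrite /Dcard (perm_size (uniq_perm (Dset_uniq t x) (_ : uniq [:: [::]]) _)) //.
move=> y; rewrite inE; apply/idP/eqP => [/E // | ->].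
by rewrite -(E _ Hin).
Qed.

Variable q : nat.
Hypothesis q_gt0 : 0 < q.

Definition Zs c o M := mkseq (fun i => (c + (i + o) %/ b) %% q) M.
Definition H M s := Dcard s b (Zs 0 0 M).

Lemma drop_Zs d c o M : drop d (Zs c o M) = Zs c (o + d) (M - d).
Proof.
apply: (@eq_from_nth _ 0); first by rewrite size_drop !size_mkseq.
move=> i; rewrite size_drop size_mkseq => Hi.
rewrite nth_drop !nth_mkseq; [|lia|lia].
by rewrite (_ : d + i + o = i + (o + d)) //; lia.
Qed.

Lemma all_mod k : all (fun i => i %% q != k %% q) (iota 0 k) = (k < q).
Proof.
case: (ltnP k q) => Hkq.
  apply/allP => i; rewrite mem_iota => /andP [_ Hi]; rewrite !modn_small //; lia.
apply/negbTE/negP => /allP /(_ (k %% q)); rewrite mem_iota modn_mod eqxx /=.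
move=> H; have := ltn_pmod k q_gt0; lia.
Qed.

Lemma newk_Zs c o M k : k * b < M -> newk (Zs c o M) k = (k < q).
Proof.
move=> Hk; rewrite /newk -all_mod; apply: eq_in_all => i; rewrite mem_iota => /andP [_ Hi].
have Hib : i * b < M by apply: leq_ltn_trans Hk; apply: leq_mul; lia.
rewrite !nth_mkseq // !divnMDl // !addnA -!(addnC (o %/ b)) !addnA.
by rewrite eqn_modDl.
Qed.

Lemma Zs_decomp c o M s : s * b < M ->
  Dcard s b (Zs c o M) =
  \sum_(k <- iota 0 s.+1 | k < q) Dcard (s - k) b (Zs c (o + (k * b).+1) (M - (k * b).+1)).
Proof.
move=> Hs; rewrite Dcard_decomp ?size_mkseq // big_seq_cond [RHS]big_seq_cond.
apply: eq_big => [k|k /andP [Hk _]]; last by rewrite drop_Zs.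
case Hk: (k \in iota 0 s.+1); rewrite ?andbT ?andbF // newk_Zs //.
apply: leq_ltn_trans Hs; apply: leq_mul => //; move: Hk; rewrite mem_iota; lia.
Qed.

Lemma Zs_inv M : forall s c o, s * b <= M -> Dcard s b (Zs c o M) = H M s.
Proof.
elim/ltn_ind: M => M IH s c o Hs.
case: s Hs => [|s] Hs; first by [].
case: (ltnP (s.+1 * b) M) => HM; last first.
  have E : M = s.+1 * b by lia.
  by rewrite /H !Dcard_exact // size_mkseq.
rewrite /H !Zs_decomp //; rewrite big_seq_cond [RHS]big_seq_cond.
apply: eq_bigr => k /andP [Hk _]; move: Hk; rewrite mem_iota => /andP [_ Hk].
have Hkb : k * b <= s.+1 * b by apply: leq_mul; lia.
rewrite !IH //; try lia; rewrite mulnBl; lia.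
Qed.

Lemma H_mono M s : s.+1 * b <= M -> H (M - b) s <= H M s.+1.
Proof.
move=> Hs.
rewrite -(Zs_inv 0 b); last by rewrite mulSn in Hs; lia.
rewrite /H (_ : Zs 0 b (M - b) = drop b (Zs 0 0 M)); last by rewrite drop_Zs.
apply: uniq_leq_size; first exact: Dset_uniq.
move=> y Hy; apply/Dset_first; exists (drop b (Zs 0 0 M)) => //.
apply/mem_bd; rewrite size_mkseq; split; first by rewrite mulSn in Hs; lia.
by exists 0 => //; rewrite /burst_del take0.
Qed.

End S.

Lemma anti (f : nat -> nat) n : (forall k, k < n -> f k.+1 <= f k) ->
  forall i j, i <= j -> j <= n -> f j <= f i.
Proof.
move=> Hf i; elim=> [|j IHj] Hij Hjn; first by have -> : i = 0 by lia.
case: (ltnP i j.+1) => H; last by have -> : i = j.+1 by lia.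
apply: leq_trans (Hf _ Hjn) (IHj _ _); lia.
Qed.

Lemma sum_iota_mono (f : nat -> nat) m m' : m <= m' ->
  \sum_(k <- iota 0 m) f k <= \sum_(k <- iota 0 m') f k.
Proof. by move=> H; rewrite -(subnKC H) iotaD big_cat leq_addr. Qed.

Lemma rearr (f : nat -> nat) (P : pred nat) t : forall q,
  (forall k, k < t -> f k.+1 <= f k) -> count P (iota 0 t.+1) <= q ->
  \sum_(k <- iota 0 t.+1 | P k) f k <= \sum_(k <- iota 0 (minn t.+1 q)) f k.
Proof.
elim: t => [|t IH] q Hf Hc.
  rewrite big_cons big_nil; move: Hc; rewrite /= addn0.
  case: (P 0) => //= Hq; rewrite (_ : minn 1 q = 1); last lia.
  by rewrite big_cons big_nil.
move: Hc; rewrite -addn1 iotaD big_cat count_cat add0n (_ : iota t.+1 1 = [:: t.+1]) // big_cons big_nil.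
rewrite (_ : count P [:: t.+1] = P t.+1); last by rewrite /= addn0.
have Hf' : forall k, k < t -> f k.+1 <= f k by move=> k Hk; apply: Hf; lia.
case: (P t.+1) => Hc; rewrite ?addn0.
  have := IH q.-1 Hf' ltac:(lia).
  set m := minn t.+1 q.-1 => Hle.
  rewrite (_ : minn (t.+1 + 1) q = m + 1); last by rewrite /m; lia.
  rewrite iotaD big_cat add0n (_ : iota m 1 = [:: m]) // big_cons big_nil.
  apply: leq_add => //; apply: leq_add => //; apply: (anti Hf); rewrite /m; lia.
apply: leq_trans (leq_add (IH q Hf' ltac:(lia)) (leqnn 0)) _.
rewrite addn0; apply: sum_iota_mono; lia.
Qed.

Lemma filter_iota_lt q N : [seq k <- iota 0 N | k < q] = iota 0 (minn N q).
Proof.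
case: (leqP N q) => Hq.
  apply/all_filterP/allP => k; rewrite mem_iota; lia.
rewrite -(subnKC (ltnW Hq)) iotaD filter_cat.
rewrite (_ : [seq k <- iota 0 q | k < q] = iota 0 q); last first.
  apply/all_filterP/allP => k; rewrite mem_iota; lia.
rewrite (_ : [seq k <- iota (0 + q) (N - q) | k < q] = [::]) ?cats0 //.
rewrite -(filter_pred0 (iota (0 + q) (N - q))); apply: eq_in_filter => k.
rewrite mem_iota /=; lia.
Qed.

Section M.
Variable b q : nat.
Hypothesis b_gt0 : 0 < b.
Hypothesis q_gt0 : 0 < q.

Lemma Dmax_bound n : forall t (x : seq nat), size x = n -> all (fun v => v < q) x ->
  t * b <= n -> Dcard t b x <= H b q n t.
Proof.
elim/ltn_ind: n => n IH t x Hx Hq Ht.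
case: t Ht => [|t] Ht; first by [].
case: (ltnP (t.+1 * b) n) => Hn; last first.
  by rewrite /H !Dcard_exact // ?size_mkseq //; lia.
pose f k := H b q (n - (k * b).+1) (t.+1 - k).
rewrite (Dcard_decomp b_gt0) ?Hx //.
apply: (@leq_trans (\sum_(k <- iota 0 t.+2 | newk b x k) f k)).
  rewrite big_seq_cond [X in _ <= X]big_seq_cond; apply: leq_sum => k /andP [Hk _].
  move: Hk; rewrite mem_iota => /andP [_ Hk].
  have Hkb : k * b <= t.+1 * b by apply: leq_mul; lia.
  apply: IH; first lia.
  - by rewrite size_drop Hx.
  - by apply/allP => v /mem_drop /(allP Hq).
  - rewrite mulnBl; lia.
apply: (@leq_trans (\sum_(k <- iota 0 (minn t.+2 q)) f k)).
  apply: rearr.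
    move=> k Hk; rewrite /f.
    have Hkb : k.+1 * b <= t.+1 * b by apply: leq_mul; lia.
    have := @H_mono b b_gt0 q q_gt0 (n - (k * b).+1) (t - k).
    rewrite (_ : (t.+1 - k.+1) = t - k) // (_ : t.+1 - k = (t - k).+1); last lia.
    rewrite (_ : n - (k.+1 * b).+1 = n - (k * b).+1 - b); last by rewrite mulSn in Hkb *; lia.
    apply; rewrite mulSn mulnBl; rewrite mulSn in Hkb; lia.
  rewrite -size_filter -(size_map (fun k => nth 0 x (k * b))).
  rewrite -(size_iota 0 q); apply: uniq_leq_size; first exact: uniq_heads.
  move=> v /mapP [k]; rewrite mem_filter mem_iota => /andP [_ /andP [_ Hk]] ->.
  have Hkb : k * b <= t.+1 * b by apply: leq_mul; lia.
  rewrite mem_iota /=; apply: (allP Hq); apply: mem_nth; rewrite Hx; lia.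
rewrite /H (Zs_decomp b_gt0 q_gt0) ?size_mkseq // -[X in _ <= X]big_filter filter_iota_lt.
rewrite big_seq [X in _ <= X]big_seq; apply: leq_sum => k; rewrite mem_iota => /andP [_ Hk].
have Hkb : k * b <= t.+1 * b by apply: leq_mul; lia.
rewrite /f (Zs_inv b_gt0 q_gt0) //; rewrite mulnBl; lia.
Qed.

End M.

Theorem theorem4p9 (q t b n sigma j : nat) :
  2 <= q -> 1 <= t -> 1 <= b -> b * t + 1 <= n ->
  sigma < q -> j <= b - 1 ->
  Dcard t b (Ycyc sigma j n q b) = dcyc q b n t /\
  dcyc q b n t = Dmax q b n t.
Proof.
move=> Hq Ht Hb Hn Hs Hj.
have q_gt0 : 0 < q by lia.
have Htb : t * b <= n by rewrite mulnC; lia.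
have Hdc : dcyc q b n t = H b q n t.
  rewrite /dcyc ifT; last lia.
  by rewrite /H /Zs /Xcyc; congr Dcard; apply: eq_mkseq => i; rewrite addn0.
rewrite Hdc; split.
  rewrite -(Zs_inv Hb q_gt0 sigma (b - j) Htb); congr Dcard.
  have Hjn : j < n by have := leq_pmulr b Ht; lia.
  apply: (@eq_from_nth _ 0).
    by rewrite size_cat size_nseq !size_mkseq; lia.
  move=> i; rewrite size_cat size_nseq size_mkseq => Hi.
  rewrite [RHS]nth_mkseq; last lia.
  rewrite nth_cat size_nseq; case: ltnP => Hij.
    rewrite nth_nseq Hij divn_small; last lia.
    by rewrite addn0 modn_small.
  rewrite nth_mkseq; last lia.
  rewrite (_ : i + (b - j) = 1 * b + (i - j)); last lia.
  by rewrite divnMDl // modnDml addnA.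
apply/eqP; rewrite eqn_leq; apply/andP; split.
  case: q Hq Hs q_gt0 {Hdc} => [|q'] // Hq Hs q_gt0.
  have Hsz : size (map (@inord q') (Zs b q'.+1 0 0 n)) == n by rewrite size_map size_mkseq.
  have := @leq_bigmax _ (fun x : n.-tuple 'I_q'.+1 => Dcard t b [seq nat_of_ord i | i <- x]) (Tuple Hsz).
  rewrite /Dmax; apply: leq_trans; rewrite /= -map_comp map_id_in // => v.
  move=> /mapP [i _ ->] /=; rewrite inordK //; exact: ltn_pmod.
apply/bigmax_leqP => x _; apply: (Dmax_bound Hb q_gt0) => //.
  by rewrite size_map size_tuple.
by apply/allP => v /mapP [i _ ->].
Qed.
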